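(* Let $(X,d)$ be a finite metric space and $\mathcal{Y}=(Y_i,d_i)_{i\in I}$ a finite family of metric spaces. If $X$ embeds stochastically into $\mathcal{Y}$ with distortion $D$, then $Wa(X)$ embeds stochastically into the family $(Wa(Y_i))_{i\in I}$ with distortion $D$. More precisely, if the numbers $p_i$ and maps $f_i:X\to Y_i$ realize the stochastic embedding of $X$, then the same $p_i$ and the push-forward maps $(f_i)_*:Wa(X)\to Wa(Y_i)$, $\mu\mapsto (f_i)_*\mu$, realize a stochastic embedding of $Wa(X)$ with distortion $D$.
   Context: For a metric space $(Y,d)$, $P_1(Y)$ is the set of Borel probability measures on $Y$ with finite first moment, and $Wa(Y)$ is $P_1(Y)$ with the Wasserstein distance $Wa(\mu,\nu)=\inf_\pi\int d(x,y)\,d\pi(x,y)$, the infimum over couplings $\pi$ (probability measures on $Y\times Y$ with marginals $\mu,\nu$). A metric space $(X,d)$ embeds stochastically with distortion $D\ge1$ into a finite family $(Y_i,d_i)_{i\in I}$ of metric spaces if there are numbers $p_i\ge0$ with $\sum_i p_i=1$ and maps $f_i:X\to Y_i$ such that each $f_i$ is non-contracting ($d_i(f_i(x),f_i(y))\ge d(x,y)$) and $\sum_i p_i d_i(f_i(x),f_i(y))\le D\,d(x,y)$ for all $x,y\in X$. *)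

(* Defs.v *)
From HB Require Import structures.
From mathcomp Require Import all_boot all_order all_algebra.
From mathcomp Require Import boolp classical_sets reals.
Set Implicit Arguments. Unset Strict Implicit. Unset Printing Implicit Defensive.
Import Order.TTheory GRing.Theory Num.Theory.
Local Open Scope ring_scope.
Local Open Scope classical_set_scope.

Section Defs.
Variable R : realType.

Definition is_metric (T : Type) (d : T -> T -> R) : Prop :=
  (forall x y, 0 <= d x y) /\ (forall x y, d x y = 0 <-> x = y) /\
  (forall x y, d x y = d y x) /\ (forall x y z, d x z <= d x y + d y z).

Definition fsprob (T : eqType) (m : T -> R) : Prop :=
  exists s : seq T, [/\ uniq s, (forall x, x \notin s -> m x = 0),
                        (forall x, 0 <= m x) & \sum_(x <- s) m x = 1].

Definition prob (X : finType) (m : X -> R) : Prop :=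
  (forall x, 0 <= m x) /\ \sum_(x : X) m x = 1.

Definition push (X : finType) (V : eqType) (f : X -> V) (mu : X -> R) : V -> R :=
  fun y => \sum_(x : X | f x == y) mu x.

Definition coupling (T : eqType) (s : seq T) (pi : T -> T -> R) (mu nu : T -> R) : Prop :=
  [/\ uniq s, (forall x y, 0 <= pi x y),
      (forall x y, (x \notin s) || (y \notin s) -> pi x y = 0),
      (forall x, \sum_(y <- s) pi x y = mu x) &
      (forall y, \sum_(x <- s) pi x y = nu y)].

Definition Wa (T : eqType) (dT : T -> T -> R) (mu nu : T -> R) : R :=
  inf [set c : R | exists (s : seq T) (pi : T -> T -> R),
         coupling s pi mu nu /\
         c = \sum_(x <- s) \sum_(y <- s) pi x y * dT x y].

(* stochastic embedding with distortion D of (A, dT) into the family (B i, dU i),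
   where A and B i are the subsets of the carrier types forming the spaces *)
Definition stoch_embedding (T : Type) (A : T -> Prop) (I : finType)
  (U : I -> Type) (B : forall i, U i -> Prop)
  (dT : T -> T -> R) (dU : forall i, U i -> U i -> R)
  (p : I -> R) (f : forall i, T -> U i) (D : R) : Prop :=
  [/\ 1 <= D, (forall i, 0 <= p i) & \sum_(i : I) p i = 1] /\
  [/\ (forall i x, A x -> B i (f i x)),
      (forall i x y, A x -> A y -> dT x y <= dU i (f i x) (f i y)) &
      (forall x y, A x -> A y -> \sum_(i : I) p i * dU i (f i x) (f i y) <= D * dT x y)].
End Defs.

(* Main.v *)
Require Import Defs.
From HB Require Import structures.
From mathcomp Require Import all_boot all_order all_algebra.
From mathcomp Require Import boolp classical_sets reals.
From mathcomp Require Import ring.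
Import Order.TTheory GRing.Theory Num.Theory.
Local Open Scope ring_scope.

Set Implicit Arguments. Unset Strict Implicit.
Section H.
Variable R : realType.

Lemma sum1_seq (T : eqType) (S : seq T) (a : T) (F : T -> R) :
  uniq S -> \sum_(y <- S | a == y) F y = if a \in S then F a else 0.
Proof.
elim: S => [|b S IH] /=; first by rewrite big_nil.
case/andP=> bS uS; rewrite big_cons in_cons IH //.
case: eqP => [->|_] /=; last by [].
by rewrite (negbTE bS) addr0.
Qed.

Lemma partS' (X : finType) (T : eqType) (g : X -> T) (S : seq T) (F : X -> R) :
  uniq S -> \sum_(y <- S) \sum_(x | g x == y) F x =
            \sum_x (if g x \in S then F x else 0).
Proof.
move=> uS.
rewrite (eq_bigr (fun y => \sum_x if g x == y then F x else 0)); last first.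
  by move=> y _; rewrite big_mkcond.
rewrite exchange_big; apply: eq_bigr => x _.
by rewrite -big_mkcond sum1_seq.
Qed.

Lemma partS (X : finType) (T : eqType) (g : X -> T) (S : seq T) (F : X -> R) :
  uniq S -> (forall x, g x \in S) ->
  \sum_(y <- S) \sum_(x | g x == y) F x = \sum_x F x.
Proof.
move=> uS gS; rewrite partS' //; apply: eq_bigr => x _; by rewrite gS.
Qed.

Lemma regroup (X : finType) (T : eqType) (g : X -> T) (S : seq T) (h : T -> R) (w : X -> R) :
  uniq S -> (forall y, y \notin S -> h y = 0) ->
  \sum_x h (g x) * w x = \sum_(y <- S) h y * push g w y.
Proof.
move=> uS hS.
rewrite (eq_bigr (fun y => \sum_(x | g x == y) h (g x) * w x)); last first.
  move=> y _; rewrite /push mulr_sumr; apply: eq_bigr => x /eqP ->; by [].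
rewrite partS' //; apply: eq_bigr => x _.
case: ifP => // /negbT /hS ->; by rewrite mul0r.
Qed.

Lemma sum_seq_full (X : finType) (s : seq X) (F : X -> R) :
  uniq s -> (forall x, x \notin s -> F x = 0) -> \sum_(x <- s) F x = \sum_x F x.
Proof.
move=> us Fs; rewrite big_uniq // [RHS](bigID (mem s)) /=.
by rewrite [X in _ + X]big1 ?addr0 // => x /Fs.
Qed.

Lemma sum_enum (X : finType) (F : X -> R) : \sum_(x <- enum X) F x = \sum_x F x.
Proof. by apply: sum_seq_full; [exact: enum_uniq| move=> x; rewrite mem_enum]. Qed.

Lemma cost_full (X : finType) (s : seq X) pi (mu nu : X -> R) (F : X -> X -> R) :
  coupling s pi mu nu ->
  \sum_(x <- s) \sum_(x' <- s) pi x x' * F x x' = \sum_x \sum_x' pi x x' * F x x'.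
Proof.
case=> us _ off _ _.
rewrite (sum_seq_full us); last first.
  move=> x xs; rewrite big1 // => x' _; by rewrite off ?xs // mul0r.
apply: eq_bigr => x _; apply: sum_seq_full => // x' x's.
by rewrite off ?x's ?orbT // mul0r.
Qed.

Lemma row_full (X : finType) (s : seq X) pi (mu nu : X -> R) x :
  coupling s pi mu nu -> \sum_x' pi x x' = mu x.
Proof.
case=> us _ off r _; rewrite -r; symmetry; apply: sum_seq_full => // x' H.
by rewrite off // H orbT.
Qed.

Lemma col_full (X : finType) (s : seq X) pi (mu nu : X -> R) x' :
  coupling s pi mu nu -> \sum_x pi x x' = nu x'.
Proof.
case=> us _ off _ c; rewrite -c; symmetry; apply: sum_seq_full => // x H.
by rewrite off // H.
Qed.

Definition pushpi (X : finType) (T : eqType) (g : X -> T) (pi : X -> X -> R) :=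
  fun y y' => \sum_(x | g x == y) \sum_(x' | g x' == y') pi x x'.

Lemma gS (X : finType) (T : eqType) (g : X -> T) x : g x \in undup (map g (enum X)).
Proof. by rewrite mem_undup map_f // mem_enum. Qed.

Lemma push_coupling (X : finType) (T : eqType) (g : X -> T) s pi (mu nu : X -> R) :
  coupling s pi mu nu ->
  coupling (undup (map g (enum X))) (pushpi g pi) (push g mu) (push g nu).
Proof.
move=> C; have C' := C; case: C' => us pi0 off r c.
have uS := undup_uniq (map g (enum X)).
split => //.
- by move=> y y'; apply: sumr_ge0 => x _; apply: sumr_ge0.
- move=> y y' /orP [] H.
    rewrite /pushpi big1 // => x /eqP gx; move: H; by rewrite -gx gS.
  rewrite /pushpi big1 // => x _; rewrite big1 // => x' /eqP gx; move: H; by rewrite -gx gS.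
- move=> y; rewrite /pushpi exchange_big /push; apply: eq_bigr => x _.
  rewrite partS //; [exact: (row_full x C) | exact: gS].
- move=> y'; rewrite /pushpi partS //; last exact: gS.
  rewrite exchange_big /push; apply: eq_bigr => x' _; exact: (col_full x' C).
Qed.

Lemma push_cost (X : finType) (T : eqType) (g : X -> T) (pi : X -> X -> R) (e : T -> T -> R) :
  let S := undup (map g (enum X)) in
  \sum_(y <- S) \sum_(y' <- S) pushpi g pi y y' * e y y' =
  \sum_x \sum_x' pi x x' * e (g x) (g x').
Proof.
move=> S; have uS : uniq S := undup_uniq _.
have gS' : forall x, g x \in S := gS g.
rewrite (eq_bigr (fun y => \sum_(x | g x == y) \sum_(y' <- S) \sum_(x' | g x' == y') pi x x' * e (g x) (g x'))).
  rewrite partS //; apply: eq_bigr => x _; by rewrite partS.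
move=> y _; rewrite exchange_big /=; apply: eq_bigr => y' _.
rewrite /pushpi mulr_suml; apply: eq_bigr => x /eqP gx.
rewrite mulr_suml; apply: eq_bigr => x' /eqP gx'; by rewrite gx gx'.
Qed.

Lemma prod_coupling (X : finType) (mu nu : X -> R) :
  prob mu -> prob nu -> coupling (enum X) (fun x y => mu x * nu y) mu nu.
Proof.
move=> [m0 m1] [n0 n1]; split.
- exact: enum_uniq.
- by move=> x y; rewrite mulr_ge0.
- by move=> x y; rewrite !mem_enum.
- by move=> x; rewrite sum_enum -mulr_sumr n1 mulr1.
- by move=> y; rewrite sum_enum -mulr_suml m1 mul1r.
Qed.

Lemma cost_ge0 (T : eqType) (s : seq T) pi (mu nu : T -> R) (e : T -> T -> R) :
  (forall x y, 0 <= e x y) -> coupling s pi mu nu ->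
  0 <= \sum_(x <- s) \sum_(y <- s) pi x y * e x y.
Proof.
move=> e0 [_ p0 _ _ _]; apply: sumr_ge0 => x _; apply: sumr_ge0 => y _.
by rewrite mulr_ge0.
Qed.

Lemma Wa_lb (T : eqType) (e : T -> T -> R) mu nu :
  (forall x y, 0 <= e x y) -> has_lbound
   [set c : R | exists (s : seq T) (pi : T -> T -> R),
         coupling s pi mu nu /\
         c = \sum_(x <- s) \sum_(y <- s) pi x y * e x y].
Proof.
move=> e0; exists 0 => c [s [pi [C ->]]]; exact: cost_ge0 C.
Qed.


Lemma noncontract (X : finType) (T : eqType) (d : X -> X -> R) (e : T -> T -> R) (g : X -> T)
  (mu nu : X -> R) :
  (forall x y, 0 <= d x y) -> (forall x y, 0 <= e x y) ->
  (forall x x', d x x' <= e (g x) (g x')) -> prob mu -> prob nu ->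
  Wa d mu nu <= Wa e (push g mu) (push g nu).
Proof.
move=> d0 e0 dle Pmu Pnu.
have [m0 _] := Pmu; have [n0 _] := Pnu.
rewrite /Wa; apply: lb_le_inf.
  exists (\sum_(y <- undup (map g (enum X))) \sum_(y' <- undup (map g (enum X)))
            pushpi g (fun x y => mu x * nu y) y y' * e y y').
  do 2 eexists; split; last reflexivity.
  exact: push_coupling (prod_coupling Pmu Pnu).
move=> c [s' [pi' [C ->]]].
have C' := C; case: C' => us' p0 off r c'.
set M := push g mu; set N := push g nu.
have M0 : forall y, M y = 0 -> forall y', pi' y y' = 0.
  move=> y My y'; case ys: (y' \in s'); last by rewrite off // ys orbT.
  move: My; rewrite /M -r => /eqP; rewrite psumr_eq0 // => /allP/(_ y' ys) /=.
  by move/eqP.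
have N0 : forall y', N y' = 0 -> forall y, pi' y y' = 0.
  move=> y' Ny y; case ys: (y \in s'); last by rewrite off // ys.
  move: Ny; rewrite /N -c' => /eqP; rewrite psumr_eq0 // => /allP/(_ y ys) /=.
  by move/eqP.
have Mge0 : forall y, 0 <= M y by move=> y; apply: sumr_ge0.
have Nge0 : forall y, 0 <= N y by move=> y; apply: sumr_ge0.
have muM : forall x, mu x / M (g x) * M (g x) = mu x.
  move=> x; case: (eqVneq (M (g x)) 0) => H; last by rewrite divfK.
  rewrite H mulr0; move: H; rewrite /M /push => /psumr_eq0P H.
  by rewrite H //; move=> i _; apply: m0.
have nuN : forall x, nu x / N (g x) * N (g x) = nu x.
  move=> x; case: (eqVneq (N (g x)) 0) => H; last by rewrite divfK.
  rewrite H mulr0; move: H; rewrite /N /push => /psumr_eq0P H.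
  by rewrite H //; move=> i _; apply: n0.
pose pi x x' := pi' (g x) (g x') * (mu x / M (g x)) * (nu x' / N (g x')).
have pi0 : forall x x', 0 <= pi x x'.
  move=> x x'; rewrite /pi; apply: mulr_ge0; [apply: mulr_ge0|]; rewrite ?divr_ge0 //; apply: p0.
have rowc : forall x (t : T -> R), \sum_x' pi x x' * t (g x') =
    mu x / M (g x) * \sum_(y' <- s') pi' (g x) y' * t y'.
  move=> x t.
  rewrite (eq_bigr (fun x' => (pi' (g x) (g x') * t (g x') / N (g x')) * nu x' * (mu x / M (g x)))); last first.
    by move=> x' _; rewrite /pi; ring.
  rewrite -mulr_suml mulrC; congr (_ * _).
  rewrite (@regroup _ _ _ s' (fun y' => pi' (g x) y' * t y' / N y')) //; last first.
    by move=> y' H; rewrite off ?H ?orbT // !mul0r.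
  apply: eq_bigr => y' _.
  case: (eqVneq (N y') 0) => H; last by rewrite divfK.
  by rewrite N0 // !mul0r.
have colc : forall x', \sum_x pi x x' = nu x'.
  move=> x'.
  rewrite (eq_bigr (fun x => (pi' (g x) (g x') / M (g x)) * mu x * (nu x' / N (g x')))); last first.
    by move=> x _; rewrite /pi; ring.
  rewrite -mulr_suml.
  rewrite (@regroup _ _ _ s' (fun y => pi' y (g x') / M y)) //; last first.
    by move=> y H; rewrite off ?H // !mul0r.
  rewrite (eq_bigr (fun y => pi' y (g x'))); last first.
    move=> y _; case: (eqVneq (M y) 0) => H; last by rewrite divfK.
    by rewrite M0 // !mul0r.
  by rewrite c' mulrC nuN.
have Cpi : coupling (enum X) pi mu nu.
  split => //.
  - exact: enum_uniq.
  - by move=> x y; rewrite !mem_enum.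
  - move=> x; rewrite sum_enum.
    rewrite (eq_bigr (fun x' => pi x x' * 1)); last first.
      by move=> x' _; rewrite mulr1.
    rewrite (rowc x (fun _ => 1)) (eq_bigr (fun y' => pi' (g x) y')); last by move=> *; rewrite mulr1.
    rewrite r; exact: muM.
  - by move=> y; rewrite sum_enum colc.
apply: (le_trans (ge_inf (Wa_lb mu nu d0) _)).
  by do 2 eexists; split; [exact: Cpi | reflexivity].
rewrite (cost_full _ Cpi).
apply: (le_trans (y := \sum_x \sum_x' pi x x' * e (g x) (g x'))).
  apply: ler_sum => x _; apply: ler_sum => x' _; exact: ler_wpM2l.
rewrite (eq_bigr (fun x => mu x / M (g x) * \sum_(y' <- s') pi' (g x) y' * e (g x) y')); last first.
  move=> x _; exact: (rowc x (e (g x))).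
pose K y := \sum_(y' <- s') pi' y y' * e y y'.
rewrite (eq_bigr (fun x => K (g x) / M (g x) * mu x)); last by move=> x _; rewrite /K; ring.
rewrite (@regroup _ _ _ s' (fun y => K y / M y)) //; last first.
  by move=> y H; rewrite /K big1 ?mul0r // => y' _; rewrite off ?H // mul0r.
rewrite le_eqVlt; apply/orP; left; apply/eqP; apply: eq_bigr => y _.
case: (eqVneq (M y) 0) => H; last by rewrite divfK.
by rewrite /K big1 ?mul0r // => y' _; rewrite M0 // mul0r.
Qed.


Lemma distort (X : finType) (d : X -> X -> R) (I : finType) (T : I -> eqType)
  (e : forall i, T i -> T i -> R) (g : forall i, X -> T i) (p : I -> R) (D : R)
  (mu nu : X -> R) :
  1 <= D -> (forall i, 0 <= p i) -> (forall x y, 0 <= d x y) ->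
  (forall i x y, 0 <= e i x y) ->
  (forall x x', \sum_i p i * e i (g i x) (g i x') <= D * d x x') ->
  prob mu -> prob nu ->
  \sum_i p i * Wa (e i) (push (g i) mu) (push (g i) nu) <= D * Wa d mu nu.
Proof.
move=> D1 p0 d0 e0 Hd Pmu Pnu.
have Dp : 0 < D by apply: lt_le_trans D1.
rewrite mulrC -ler_pdivrMr //.
rewrite /Wa; apply: lb_le_inf.
  do 3 eexists; split; [exact: prod_coupling Pmu Pnu | reflexivity].
move=> c [s [pi [C ->]]].
rewrite ler_pdivrMr // mulrC.
have C' := C; case: C' => _ pi0 _ _ _.
apply: (le_trans (y := \sum_i p i * \sum_x \sum_x' pi x x' * e i (g i x) (g i x'))).
  apply: ler_sum => i _; apply: ler_wpM2l => //.
  rewrite -push_cost; apply: ge_inf; first exact: Wa_lb.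
  do 2 eexists; split; [exact: push_coupling C | reflexivity].
rewrite (cost_full _ C).
apply: (le_trans (y := \sum_x \sum_x' pi x x' * \sum_i p i * e i (g i x) (g i x'))).
  rewrite le_eqVlt; apply/orP; left; apply/eqP.
  rewrite (eq_bigr (fun i => \sum_x \sum_x' p i * (pi x x' * e i (g i x) (g i x')))); last first.
    by move=> i _; rewrite mulr_sumr; apply: eq_bigr => x _; rewrite mulr_sumr.
  rewrite exchange_big; apply: eq_bigr => x _.
  rewrite exchange_big; apply: eq_bigr => x' _.
  rewrite mulr_sumr; apply: eq_bigr => i _; ring.
rewrite mulr_sumr; apply: ler_sum => x _.
rewrite mulr_sumr; apply: ler_sum => x' _.
rewrite mulrCA; apply: ler_wpM2l => //.
Qed.

End H.

Unset Implicit Arguments.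

Theorem lemma2 (R : realType) (X : finType) (d : X -> X -> R)
  (I : finType) (Y : I -> eqType) (dY : forall i, Y i -> Y i -> R)
  (p : I -> R) (f : forall i, X -> Y i) (D : R) :
  is_metric d -> (forall i, is_metric (dY i)) ->
  stoch_embedding (fun _ : X => True) (fun i (_ : Y i) => True) d dY p f D ->
  stoch_embedding (@prob R X) (fun i => @fsprob R (Y i))
    (Wa d) (fun i => Wa (dY i)) p (fun i => push (f i)) D.
Proof.
move=> [d0 _] HY [[D1 p0 p1] [_ Hnc Hdist]].
have e0 : forall i x y, 0 <= dY i x y by move=> i; case: (HY i).
split; first by split.
split.
- move=> i mu [m0 m1]; exists (undup (map (f i) (enum X))); split.
  + exact: undup_uniq.
  + move=> y H; rewrite /push big1 // => x /eqP fx; move: H; by rewrite -fx gS.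
  + by move=> y; apply: sumr_ge0.
  + rewrite /push partS //; [exact: undup_uniq | move=> x; rewrite mem_undup map_f // mem_enum //].
- move=> i mu nu Pmu Pnu; apply: (noncontract d0 (e0 i)) => //.
  by move=> x x'; apply: Hnc.
- move=> mu nu Pmu Pnu; apply: distort => //.
  by move=> x x'; apply: Hdist.
Qed.
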